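(* Let $M,M'\in\mathrm{Mat}(2,\mathbb{Z})$. Each of the following equivalent conditions — (a) for all integers $n\ge2$ the reductions mod $n$ of $M$ and $M'$ are $\mathrm{Mat}(2,\mathbb{Z}_n)^\times$-conjugate; (b) $\det(M)=\det(M')$, $\mathrm{trace}(M)=\mathrm{trace}(M')$ and $\mathrm{mgcd}(M)=\mathrm{mgcd}(M')$ — is equivalent to $M$ and $M'$ being $\mathrm{GL}(2,\widehat{\mathbb{Z}})$-conjugate.
   Context: For $M=\begin{pmatrix}a&b\\c&d\end{pmatrix}$, $\mathrm{mgcd}(M)=\gcd(b,c,d-a)\ge0$. $\mathrm{Mat}(2,\mathbb{Z}_n)^\times$ is the group of invertible $2\times2$ matrices over $\mathbb{Z}_n=\mathbb{Z}/n\mathbb{Z}$. $\widehat{\mathbb{Z}}=\varprojlim\mathbb{Z}_n$ is the inverse limit of the rings $\mathbb{Z}_n$ over the positive integers ordered by divisibility (the Prüfer ring), and $\mathrm{GL}(2,\widehat{\mathbb{Z}})$ is the group of invertible $2\times2$ matrices over it. *)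

(* Defs.v *)
From mathcomp Require Import all_boot all_order all_algebra.
Set Implicit Arguments. Unset Strict Implicit. Unset Printing Implicit Defensive.
Import Order.TTheory GRing.Theory Num.Theory.
Local Open Scope ring_scope.

Definition mgcd (M : 'M[int]_2) : nat :=
  absz (gcdz (gcdz (M 0 1) (M 1 0)) (M 1 1 - M 0 0)).

Definition redmx (n : nat) (M : 'M[int]_2) : 'M['Z_n]_2 :=
  map_mx (fun x : int => x%:~R) M.

Definition conj_mod (n : nat) (M M' : 'M[int]_2) : Prop :=
  exists U : 'M['Z_n]_2, U \in unitmx /\ U *m redmx n M = redmx n M' *m U.

(* Matrices over the Pruefer ring Zhat = lim Z_n.  Since Z_1 is trivial, the
   inverse limit over all n >= 1 agrees with the one over n >= 2; we index by
   k : nat standing for the modulus k.+2.  A 2x2 matrix over Zhat is a family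
   of matrices over Z_(k.+2) compatible with the reduction maps Z_m -> Z_d for
   d | m. *)
Definition redZ (m d : nat) (x : 'Z_m) : 'Z_d := (nat_of_ord x)%:R.

Definition zhat_mx := forall k : nat, 'M['Z_(k.+2)]_2.

Definition compatible (A : zhat_mx) : Prop :=
  forall k l : nat, (l.+2 %| k.+2)%N ->
    map_mx (@redZ k.+2 l.+2) (A k) = A l.

Definition zhat_of_int (M : 'M[int]_2) : zhat_mx := fun k => redmx k.+2 M.

Definition in_GL2_zhat (U : zhat_mx) : Prop :=
  compatible U /\
  exists V : zhat_mx, compatible V /\
    forall k, U k *m V k = 1%:M /\ V k *m U k = 1%:M.

Definition conj_zhat (M M' : 'M[int]_2) : Prop :=
  exists U : zhat_mx, in_GL2_zhat U /\
    forall k, U k *m zhat_of_int M k = zhat_of_int M' k *m U k.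

(* Main.v *)
Require Import Defs.
From mathcomp Require Import all_boot all_order all_algebra.
From mathcomp Require Import ring zify.
Import GRing.Theory Num.Theory.

Definition idem (pi : nat_pred) (n : nat) : nat := chinese (n`_pi) (n`_pi^') 1 0.

Lemma idem_modl pi n : idem pi n = 1 %[mod n`_pi].
Proof. exact: chinese_modl (coprime_partC pi n n) _ _. Qed.

Lemma idem_modr pi n : idem pi n = 0 %[mod n`_pi^'].
Proof. exact: chinese_modr (coprime_partC pi n n) _ _. Qed.

Lemma prime_dvd_part (pi : nat_pred) (p n : nat) : 0 < n -> prime p -> p %| n -> p \in pi -> p %| n`_pi.
Proof.
move=> Hn Hp Hpn Hpi.
have <- : p`_pi = p by apply: part_pnat_id; rewrite pnatE.
exact: partn_dvd.
Qed.
Arguments prime_dvd_part {_ _ _}.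

Lemma idem_p1 (pi : nat_pred) (p n : nat) : 0 < n -> prime p -> p %| n -> p \in pi -> idem pi n %% p = 1.
Proof.
move=> Hn Hp Hpn Hpi.
have Hd := prime_dvd_part Hn Hp Hpn Hpi.
by rewrite -(modn_dvdm _ Hd) idem_modl modn_dvdm // modn_small // prime_gt1.
Qed.
Arguments idem_p1 {_ _ _}.

Lemma idem_p0 (pi : nat_pred) (p n : nat) : 0 < n -> prime p -> p %| n -> p \notin pi -> idem pi n %% p = 0.
Proof.
move=> Hn Hp Hpn Hpi.
have Hd : p %| n`_pi^' by apply: prime_dvd_part; rewrite // inE /=.
by rewrite -(modn_dvdm _ Hd) idem_modr mod0n mod0n.
Qed.
Arguments idem_p0 {_ _ _}.

Lemma idem_compat pi n d : 0 < n -> 0 < d -> d %| n -> idem pi n = idem pi d %[mod d].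
Proof.
move=> Hn Hd Hdn.
apply/eqP; rewrite -{1 3}(partnC pi Hd) chinese_remainder ?coprime_partC //.
apply/andP; split; apply/eqP.
- have H1 : d`_pi %| n`_pi by exact: partn_dvd.
  by rewrite -(modn_dvdm _ H1) idem_modl modn_dvdm // idem_modl.
- have H1 : d`_pi^' %| n`_pi^' by exact: partn_dvd.
  by rewrite -(modn_dvdm _ H1) idem_modr modn_dvdm // idem_modr.
Qed.

Local Open Scope ring_scope.

Definition mx2 {R : Type} (a b c d : R) : 'M[R]_2 :=
  \matrix_(i < 2, j < 2) if (i : nat) == 0%N then (if (j : nat) == 0%N then a else b)
                         else (if (j : nat) == 0%N then c else d).

Lemma mx2E {R : Type} (A : 'M[R]_2) : A = mx2 (A 0 0) (A 0 1) (A 1 0) (A 1 1).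
Proof.
apply/matrixP => i j; rewrite mxE.
case: i => [[|[|//]] Hi]; case: j => [[|[|//]] Hj] /=; congr (A _ _); exact: val_inj.
Qed.

Lemma mx2_00 (R : Type) (a b c d : R) : mx2 a b c d 0 0 = a. Proof. by rewrite /mx2 mxE. Qed.
Lemma mx2_01 (R : Type) (a b c d : R) : mx2 a b c d 0 1 = b. Proof. by rewrite /mx2 mxE. Qed.
Lemma mx2_10 (R : Type) (a b c d : R) : mx2 a b c d 1 0 = c. Proof. by rewrite /mx2 mxE. Qed.
Lemma mx2_11 (R : Type) (a b c d : R) : mx2 a b c d 1 1 = d. Proof. by rewrite /mx2 mxE. Qed.

Lemma big2 (R : nmodType) (F : 'I_2 -> R) : \sum_(i < 2) F i = F 0 + F 1.
Proof. by rewrite !big_ord_recl big_ord0 addr0; congr (F _ + F _); apply: val_inj. Qed.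

Lemma mul_mx2 (R : pzRingType) (a b c d a' b' c' d' : R) :
  mx2 a b c d *m mx2 a' b' c' d' =
  mx2 (a*a' + b*c') (a*b' + b*d') (c*a' + d*c') (c*b' + d*d').
Proof.
apply/matrixP => i j; rewrite !mxE big2 !mxE.
case: i => [[|[|//]] Hi]; case: j => [[|[|//]] Hj] //=.
Qed.

Lemma det_mx2 (R : comPzRingType) (a b c d : R) : \det (mx2 a b c d) = a * d - b * c.
Proof. rewrite (expand_det_row _ 0) !big_ord_recl big_ord0 /cofactor !det_mx11 !mxE /=.
rewrite /bump /= expr0 expr1. ring. Qed.

Lemma tr_mx2 (R : pzRingType) (a b c d : R) : \tr (mx2 a b c d) = a + d.
Proof. by rewrite /mxtrace big2 !mxE. Qed.

Lemma map_mx2 (R S : Type) (f : R -> S) (a b c d : R) :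
  map_mx f (mx2 a b c d) = mx2 (f a) (f b) (f c) (f d).
Proof.
apply/matrixP => i j; rewrite !mxE.
case: i => [[|[|//]] Hi]; case: j => [[|[|//]] Hj] //=.
Qed.

Lemma mx2_1 (R : pzRingType) : 1%:M = mx2 (1 : R) 0 0 1.
Proof.
apply/matrixP => i j; rewrite !mxE.
case: i => [[|[|//]] Hi]; case: j => [[|[|//]] Hj] //=.
Qed.

Lemma scalar_mx2 (R : pzRingType) (a : R) : a%:M = mx2 a 0 0 a.
Proof.
apply/matrixP => i j; rewrite !mxE.
case: i => [[|[|//]] Hi]; case: j => [[|[|//]] Hj] //=.
Qed.

Lemma scale_mx2 (R : pzRingType) (k a b c d : R) : k *: mx2 a b c d = mx2 (k * a) (k * b) (k * c) (k * d).
Proof.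
apply/matrixP => i j; rewrite !mxE.
case: i => [[|[|//]] Hi]; case: j => [[|[|//]] Hj] //=.
Qed.

Lemma add_mx2 (R : pzRingType) (a b c d a' b' c' d' : R) :
  mx2 a b c d + mx2 a' b' c' d' = mx2 (a + a') (b + b') (c + c') (d + d').
Proof.
apply/matrixP => i j; rewrite !mxE.
case: i => [[|[|//]] Hi]; case: j => [[|[|//]] Hj] //=.
Qed.


Lemma intr_cases (R : pzRingType) (z : int) :
  (z%:~R : R) = (`|z|%N)%:R \/ (z%:~R : R) = - (`|z|%N)%:R.
Proof.
case: z => m; [left | right]; first by rewrite -pmulrn.
by rewrite NegzE mulrNz -pmulrn.
Qed.

Lemma Zp_nat_eq (n a b : nat) : (1 < n)%N -> ((a%:R : 'Z_n) = b%:R) <-> (a = b %[mod n])%N.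
Proof.
move=> Hn; split => [H | H].
  by have := congr1 (fun x : 'Z_n => (x : nat)) H; rewrite /= !val_Zp_nat.
by apply: val_inj; rewrite /= !val_Zp_nat //; exact/eqP.
Qed.

Lemma Zp_int_eq0 (n : nat) (z : int) : (1 < n)%N -> ((z%:~R : 'Z_n) = 0) <-> (n %| z)%Z.
Proof.
move=> Hn; rewrite dvdzE /=.
have E : ((`|z|%N)%:R : 'Z_n) = 0 <-> (n %| `|z|)%N.
  have -> : (0 : 'Z_n) = 0%:R by [].
  by rewrite Zp_nat_eq // mod0n; split => [/eqP|/eqP].
case: (intr_cases 'Z_n z) => ->; first exact: E.
split => [H | /E ->]; last by rewrite oppr0.
by apply/E; apply/eqP; rewrite -oppr_eq0 H.
Qed.

Lemma unit_Zp_int (n : nat) (z : int) : (1 < n)%N ->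
  ((z%:~R : 'Z_n) \is a GRing.unit) = coprime n `|z|.
Proof.
move=> Hn; case: (intr_cases 'Z_n z) => ->; first by rewrite unitZpE.
by rewrite unitrN unitZpE.
Qed.

Lemma coprime_primes (n m : nat) :
  (forall p, prime p -> (p %| n)%N -> ~~ (p %| m)%N) -> coprime n m.
Proof.
move=> H; rewrite /coprime.
case: (ltngtP (gcdn n m) 1) => // Hd.
- move: Hd; rewrite ltnS leqn0 => /eqP Hd0.
  have := dvdn_gcdl n m; have := dvdn_gcdr n m; rewrite Hd0 !dvd0n => /eqP Hm /eqP Hn; subst n m.
  by have := H 2%N isT (dvdn0 _); rewrite dvdn0.
- have Hp := pdiv_prime Hd.
  have Hpd := pdiv_dvd (gcdn n m).
  have := H _ Hp (dvdn_trans Hpd (dvdn_gcdl _ _)).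
  by rewrite (dvdn_trans Hpd (dvdn_gcdr _ _)).
Qed.

Section RedZ.
Variables (k l : nat).
Hypothesis Hkl : (l.+2 %| k.+2)%N.

Lemma redZ_nat (a : nat) : @redZ k.+2 l.+2 (a%:R) = a%:R.
Proof.
rewrite /redZ val_Zp_nat //.
by rewrite -(Zp_nat_mod (p:=l.+2)) // modn_dvdm // Zp_nat_mod.
Qed.

Lemma Zp_val (x : 'Z_(k.+2)) : x = (nat_of_ord x)%:R.
Proof. by rewrite natr_Zp. Qed.

Lemma redZD (x y : 'Z_(k.+2)) : @redZ k.+2 l.+2 (x + y) = @redZ k.+2 l.+2 x + @redZ k.+2 l.+2 y.
Proof. by rewrite [in LHS](Zp_val x) [in LHS](Zp_val y) -natrD redZ_nat natrD -(redZ_nat (nat_of_ord x)) -(redZ_nat (nat_of_ord y)) -!Zp_val. Qed.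

Lemma redZM (x y : 'Z_(k.+2)) : @redZ k.+2 l.+2 (x * y) = @redZ k.+2 l.+2 x * @redZ k.+2 l.+2 y.
Proof. by rewrite [in LHS](Zp_val x) [in LHS](Zp_val y) -natrM redZ_nat natrM -(redZ_nat (nat_of_ord x)) -(redZ_nat (nat_of_ord y)) -!Zp_val. Qed.

Lemma redZ0 : @redZ k.+2 l.+2 0 = 0.
Proof. by have := redZ_nat 0. Qed.

Lemma redZ1 : @redZ k.+2 l.+2 1 = 1.
Proof. by have := redZ_nat 1. Qed.

Lemma redZN (x : 'Z_(k.+2)) : @redZ k.+2 l.+2 (- x) = - @redZ k.+2 l.+2 x.
Proof.
apply/eqP; rewrite -subr_eq0 opprK -redZD addNr; exact/eqP/redZ0.
Qed.

Lemma redZ_int (z : int) : @redZ k.+2 l.+2 (z%:~R) = z%:~R.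
Proof.
case: z => m; first by rewrite -!pmulrn redZ_nat.
by rewrite !NegzE !mulrNz -!pmulrn redZN redZ_nat.
Qed.
End RedZ.


Section MapMx.
Variables (R S : pzRingType) (f : R -> S).
Hypothesis fD : forall x y, f (x + y) = f x + f y.
Hypothesis fM : forall x y, f (x * y) = f x * f y.
Hypothesis f0 : f 0 = 0.
Hypothesis f1 : f 1 = 1.

Lemma map_mulmx2 (A B : 'M[R]_2) : map_mx f (A *m B) = map_mx f A *m map_mx f B.
Proof. by rewrite (mx2E A) (mx2E B) mul_mx2 !map_mx2 mul_mx2 !fD !fM. Qed.

Lemma map_mx1_2 : map_mx f (1%:M : 'M[R]_2) = 1%:M.
Proof. by rewrite !mx2_1 map_mx2 f0 f1. Qed.
End MapMx.

Lemma map_invmx2 (R S : comUnitRingType) (f : R -> S)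
  (fD : forall x y, f (x + y) = f x + f y) (fM : forall x y, f (x * y) = f x * f y)
  (f0 : f 0 = 0) (f1 : f 1 = 1) (A : 'M[R]_2) :
  A \in unitmx -> map_mx f (invmx A) = invmx (map_mx f A).
Proof.
move=> HA.
have H1 : map_mx f A *m map_mx f (invmx A) = 1%:M.
  by rewrite -map_mulmx2 // mulmxV // map_mx1_2.
have [Hu _] := mulmx1_unit H1.
by rewrite -[LHS]mul1mx -(mulVmx Hu) -mulmxA H1 mulmx1.
Qed.

Lemma conj_chain (R : comUnitRingType) (A A' U U' T K K' : 'M[R]_2) :
  U \in unitmx -> U' \in unitmx -> T \in unitmx ->
  A *m U = U *m K -> A' *m U' = U' *m K' -> K *m T = T *m K' ->
  (U' *m invmx T *m invmx U) *m A = A' *m (U' *m invmx T *m invmx U).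
Proof.
move=> HU HU' HT eA eA' eK.
have -> : A = U *m K *m invmx U by rewrite -eA mulmxK.
have -> : A' = U' *m K' *m invmx U' by rewrite -eA' mulmxK.
have -> : K = T *m K' *m invmx T by rewrite -eK mulmxK.
by rewrite !mulmxA (mulmxKV HU) (mulmxKV HT) (mulmxKV HU').
Qed.

Notation "d %|Z m" := (m \in dvdz d) (at level 70, no associativity).

Definition gZ (M : 'M[int]_2) : int := (mgcd M)%:Z.
Definition bet (M : 'M[int]_2) : int := divz (M 0 1) (gZ M).
Definition gam (M : 'M[int]_2) : int := divz (M 1 0) (gZ M).
Definition del (M : 'M[int]_2) : int := divz (M 1 1 - M 0 0) (gZ M).

Lemma gZE (M : 'M[int]_2) : gZ M = gcdz (gcdz (M 0 1) (M 1 0)) (M 1 1 - M 0 0).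
Proof. by []. Qed.

Lemma gZ_dvd (M : 'M[int]_2) : [/\ gZ M %|Z M 0 1, gZ M %|Z M 1 0 & gZ M %|Z M 1 1 - M 0 0].
Proof.
have H1 := dvdz_gcdl (gcdz (M 0 1) (M 1 0)) (M 1 1 - M 0 0).
have H2 := dvdz_gcdr (gcdz (M 0 1) (M 1 0)) (M 1 1 - M 0 0).
rewrite gZE; split => //.
- exact: dvdz_trans H1 (dvdz_gcdl _ _).
- exact: dvdz_trans H1 (dvdz_gcdr _ _).
Qed.

Lemma M_decomp (M : 'M[int]_2) : M = mx2 (M 0 0) (gZ M * bet M) (gZ M * gam M) (M 0 0 + gZ M * del M).
Proof.
case: (gZ_dvd M) => H1 H2 H3.
rewrite /bet /gam /del ![gZ M * _]mulrC !divzK //.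
rewrite [in LHS](mx2E M); congr mx2; ring.
Qed.
Lemma eq_by_sub (x y : int) : x - y = 0 -> x = y.
Proof. by move/eqP; rewrite subr_eq0 => /eqP. Qed.

Lemma shift_exists (a a' g d d' q q' : int) : g != 0 -> 2*a + g*d = 2*a' + g*d' ->
  a*(a+g*d) - g*g*q = a'*(a'+g*d') - g*g*q' -> exists s, a = a' + s*g.
Proof.
move=> Hg.
have [e ->] : exists e, a' = a + e by exists (a' - a); ring.
have [w ->] : exists w, d' = d - w by exists (d - d'); ring.
move=> H1 H2.
have Hm : g * w = 2 * e.
  apply: eq_by_sub.
  have -> : g * w - 2 * e = (2*a + g*d) - (2*(a + e) + g*(d - w)) by ring.
  by rewrite H1 subrr.
have He : g * g * (w * w - 2 * w * d - 4 * (q - q')) = 0.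
  have -> : g * g * (w * w - 2 * w * d - 4 * (q - q')) =
     (g*w) * (g * w) - 2 * (g * w) * (g * d)
     + 4 * ((a*(a+g*d) - g*g*q) - ((a + e)*(a + e + g*(d - w)) - g*g*q'))
     - 4 * (a*(a+g*d) - (a + e)*(a + e + g * d - (g*w))) by ring.
  by rewrite H2 subrr mulr0 addr0 Hm; ring.
have Hmm : w * w - 2 * w * d = 4 * (q - q').
  apply: eq_by_sub.
  by move: He; move/eqP; rewrite !mulf_eq0 (negbTE Hg) /= => /eqP.
have [t Ht] : exists t, w = 2 * t.
  exists (w %/ 2)%Z.
  have Hdm := divz_eq w 2.
  have Hr : ((w %% 2)%Z == 0) || ((w %% 2)%Z == 1).
    have := modz_ge0 w (isT : (2:int) != 0); have := ltz_pmod w (isT : (0 < (2:int))).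
    lia.
  case/orP: Hr => /eqP Hr; first by rewrite {1}Hdm Hr; ring.
  exfalso; move: Hmm; rewrite Hdm Hr.
  set u := (w %/ 2)%Z. nia.
exists (- t).
move: Hm; rewrite Ht => Hm.
have : 2 * (g * t - e) = 0 by rewrite mulrBr -Hm; ring.
move/eqP; rewrite mulf_eq0 /= subr_eq0 => /eqP He'.
rewrite -He'; ring.
Qed.

Definition Kmx (M : 'M[int]_2) : 'M[int]_2 :=
  mx2 (M 0 0) (gZ M * bet M * gam M) (gZ M) (M 0 0 + gZ M * del M).
Definition Tmx (s : int) : 'M[int]_2 := mx2 1 s 0 1.

Lemma det_M (M : 'M[int]_2) :
  \det M = M 0 0 * (M 0 0 + gZ M * del M) - gZ M * gZ M * (bet M * gam M).
Proof. by rewrite [in LHS](M_decomp M) det_mx2; ring. Qed.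

Lemma tr_M (M : 'M[int]_2) : \tr M = 2 * M 0 0 + gZ M * del M.
Proof. by rewrite [in LHS](M_decomp M) tr_mx2; ring. Qed.

Lemma KT (M M' : 'M[int]_2) : \det M = \det M' -> \tr M = \tr M' -> mgcd M = mgcd M' ->
  gZ M != 0 -> exists s, Kmx M *m Tmx s = Tmx s *m Kmx M'.
Proof.
move=> Hd Ht Hg Hg0.
have Hg' : gZ M' = gZ M by rewrite /gZ Hg.
move: Hd Ht; rewrite !det_M !tr_M Hg'.
set g := gZ M; set a := M 0 0; set a' := M' 0 0.
set d := del M; set d' := del M'; set b := bet M; set b' := bet M'.
set c := gam M; set c' := gam M'.
move=> Hd Ht.
have [s Hs] := shift_exists _ _ _ _ _ _ _ Hg0 Ht Hd.
exists s.
rewrite /Kmx -/g -/a -/a' -/d -/d' -/b -/b' -/c -/c' Hg' -/g /Tmx !mul_mx2.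
have Hd' : d' = d + 2 * s.
  apply: (mulfI Hg0); apply: eq_by_sub.
  have -> : g * d' - g * (d + 2 * s) = (2 * a' + g * d') - (2 * a + g * d) + 2 * (a - (a' + s * g)) by ring.
  by rewrite Ht Hs !subrr; ring.
have Hq : b' * c' = b * c - s * s - s * d.
  apply: (mulfI (mulf_neq0 Hg0 Hg0)); apply: eq_by_sub.
  have -> : g * g * (b' * c') - g * g * (b * c - s * s - s * d) =
    (a * (a + g * d) - g * g * (b * c)) - (a' * (a' + g * d') - g * g * (b' * c'))
    - (a - (a' + s * g)) * (a + a' + s * g + g * d) + a' * g * (d' - (d + 2 * s)) by ring.
  by rewrite Hd Hs Hd' !subrr; ring.
have E01 : a * s + g * b * c * 1 = 1 * (g * b' * c') + s * (a' + g * d').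
  apply: eq_by_sub.
  have -> : a * s + g * b * c * 1 - (1 * (g * b' * c') + s * (a' + g * d')) =
    s * (a - (a' + s * g)) - g * (b' * c' - (b * c - s * s - s * d)) - s * g * (d' - (d + 2 * s)) by ring.
  by rewrite Hq Hs Hd' !subrr; ring.
rewrite E01; congr mx2.
- by rewrite Hs; ring.
- by ring.
- by rewrite Hd' Hs; ring.
Qed.


Definition Umx {R : pzRingType} (b c d : int) (x y : R) : 'M[R]_2 :=
  mx2 x (b%:~R * y) y (c%:~R * x + d%:~R * y).

Definition imap (R : pzRingType) (A : 'M[int]_2) : 'M[R]_2 := map_mx (fun z : int => z%:~R) A.

Lemma MU (R : comPzRingType) (M : 'M[int]_2) (x y : R) :
  imap R M *m Umx (bet M) (gam M) (del M) x y =
  Umx (bet M) (gam M) (del M) x y *m imap R (Kmx M).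
Proof.
rewrite /imap {1}(M_decomp M) /Kmx /Umx !map_mx2 !mul_mx2 !(intrD, intrM).
congr mx2; ring.
Qed.

Lemma det_Umx (R : comPzRingType) b c d (x y : R) :
  \det (Umx b c d x y) = x * (c%:~R * x + d%:~R * y) - b%:~R * y * y.
Proof. by rewrite /Umx det_mx2; ring. Qed.

Lemma natz_intr (R : pzRingType) (n : nat) : ((n%:Z)%:~R : R) = n%:R.
Proof. by rewrite -pmulrn. Qed.

Definition pix (b c : int) : nat_pred := [pred q : nat | ~~ (q %| `|c|)%N || (q %| `|b|)%N].
Definition piy (c : int) : nat_pred := [pred q : nat | (q %| `|c|)%N].

Lemma Fp_idem (P : nat_pred) (p n : nat) : (0 < n)%N -> prime p -> (p %| n)%N ->
  ((idem P n)%:R : 'F_p) = if p \in P then 1 else 0.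
Proof.
move=> Hn Hp Hpn; rewrite -(Fp_nat_mod Hp).
by case: ifP => H; [rewrite idem_p1 | rewrite idem_p0 ?H].
Qed.

Lemma Fp_dvd (p : nat) (z : int) : prime p -> ((z%:~R : 'F_p) == 0) = (p %| `|z|)%N.
Proof. by move=> Hp; rewrite -(dvdz_pcharf (pchar_Fp Hp)) dvdzE. Qed.

Lemma Umx_unit (n : nat) (b c d : int) : (1 < n)%N ->
  (forall p, prime p -> (p %| `|b|)%N -> (p %| `|c|)%N -> (p %| `|d|)%N -> False) ->
  Umx b c d ((idem (pix b c) n)%:R : 'Z_n) ((idem (piy c) n)%:R) \in unitmx.
Proof.
move=> Hn Hprim.
set X := idem (pix b c) n; set Y := idem (piy c) n.
set F : int := X%:Z * (c * X%:Z + d * Y%:Z) - b * Y%:Z * Y%:Z.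
have HF : forall R : comPzRingType, \det (Umx b c d (X%:R : R) (Y%:R)) = F%:~R.
  move=> R; rewrite det_Umx /F intrB !(intrD, intrM) !natz_intr //.
rewrite unitmxE HF unit_Zp_int //.
apply: coprime_primes => p Hp Hpn.
have Hn0 : (0 < n)%N by apply: ltnW.
rewrite -Fp_dvd // -HF det_Umx !Fp_idem // /pix /piy !inE.
have Eb := Fp_dvd _ b Hp; have Ec := Fp_dvd _ c Hp; have Ed := Fp_dvd _ d Hp.
case: (boolP (p %| `|c|)%N) => Hc /=.
- case: (boolP (p %| `|b|)%N) => Hb /=.
  + have Hb' := Hb; have Hc' := Hc.
    move: Hb' Hc'; rewrite -Eb -Ec => /eqP -> /eqP ->.
    rewrite !(mul0r, mulr1, mul1r, add0r, subr0).
    apply/negP; rewrite Ed => Hd.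
    exact: (Hprim p Hp Hb Hc Hd).
  + rewrite !(mul0r, mulr1, mul1r, mulr0, add0r, addr0, sub0r, oppr_eq0).
    by rewrite Eb.
- rewrite !(mul0r, mulr1, mul1r, mulr0, add0r, addr0, subr0).
  by rewrite Ec.
Qed.


Lemma prim (M : 'M[int]_2) : gZ M != 0 ->
  forall p, prime p -> (p %| `|bet M|)%N -> (p %| `|gam M|)%N -> (p %| `|del M|)%N -> False.
Proof.
move=> Hg p Hp Hb Hc Hd.
case: (gZ_dvd M) => H1 H2 H3.
have Hpg : forall z : int, (p %| `|z|)%N -> (p%:Z * gZ M %| z * gZ M)%Z.
  by move=> z Hz; rewrite dvdz_mul2r // dvdzE.
have := Hpg _ Hb; have := Hpg _ Hc; have := Hpg _ Hd.
rewrite /bet /gam /del !divzK // => Kd Kc Kb.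
have : (p%:Z * gZ M %| 1 * gZ M)%Z by rewrite mul1r {2}/gZ gZE !dvdz_gcd Kb Kc Kd.
rewrite dvdz_mul2r // dvdzE /= dvdn1 => /eqP Hp1.
by move: Hp; rewrite Hp1.
Qed.

Definition Uk (M : 'M[int]_2) (k : nat) : 'M['Z_(k.+2)]_2 :=
  Umx (bet M) (gam M) (del M) ((idem (pix (bet M) (gam M)) k.+2)%:R)
      ((idem (piy (gam M)) k.+2)%:R).

Lemma Uk_unit M k : gZ M != 0 -> Uk M k \in unitmx.
Proof. by move=> Hg; apply: Umx_unit => //; exact: prim. Qed.

Lemma Uk_conj M k : redmx k.+2 M *m Uk M k = Uk M k *m redmx k.+2 (Kmx M).
Proof. exact: MU. Qed.

Lemma map_redZ_redmx k l (A : 'M[int]_2) : (l.+2 %| k.+2)%N ->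
  map_mx (@redZ k.+2 l.+2) (redmx k.+2 A) = redmx l.+2 A.
Proof. by move=> H; apply/matrixP => i j; rewrite !mxE redZ_int. Qed.

Lemma idem_Z P k l : (l.+2 %| k.+2)%N ->
  @redZ k.+2 l.+2 ((idem P k.+2)%:R) = (idem P l.+2)%:R.
Proof.
move=> H; rewrite redZ_nat //.
by apply/Zp_nat_eq => //; apply: idem_compat.
Qed.

Lemma Uk_compat M k l : (l.+2 %| k.+2)%N -> map_mx (@redZ k.+2 l.+2) (Uk M k) = Uk M l.
Proof.
move=> H; by rewrite /Uk /Umx map_mx2 !(redZD _ _ H, redZM _ _ H, redZ_int _ _ H, idem_Z _ _ _ H).
Qed.


Lemma Tmx_unit n s : redmx n (Tmx s) \in unitmx.
Proof.
by rewrite unitmxE /redmx /Tmx map_mx2 det_mx2 !mulr1z mulr0z mulr0 subr0 mulr1 unitr1.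
Qed.

Lemma redmxM n (A B : 'M[int]_2) : redmx n (A *m B) = redmx n A *m redmx n B.
Proof. by apply: map_mulmx2 => x y; [exact: intrD | exact: intrM]. Qed.

Lemma redZ_compat_mulmx k l (H : (l.+2 %| k.+2)%N) (A B : 'M['Z_(k.+2)]_2) :
  map_mx (@redZ k.+2 l.+2) (A *m B) = map_mx (@redZ k.+2 l.+2) A *m map_mx (@redZ k.+2 l.+2) B.
Proof. by apply: map_mulmx2 => x y; [exact: redZD | exact: redZM]. Qed.

Lemma redZ_compat_inv k l (H : (l.+2 %| k.+2)%N) (A : 'M['Z_(k.+2)]_2) :
  A \in unitmx -> map_mx (@redZ k.+2 l.+2) (invmx A) = invmx (map_mx (@redZ k.+2 l.+2) A).
Proof.
apply: map_invmx2 => [x y|x y||]; [exact: redZD | exact: redZM | exact: redZ0 | exact: redZ1].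
Qed.

Lemma zero_case (M : 'M[int]_2) : gZ M = 0 -> M = mx2 (M 0 0) 0 0 (M 0 0).
Proof. by move=> H; rewrite [in LHS](M_decomp M) H !mul0r addr0. Qed.

Lemma b_to_zhat (M M' : 'M[int]_2) :
  \det M = \det M' -> \tr M = \tr M' -> mgcd M = mgcd M' -> conj_zhat M M'.
Proof.
move=> Hd Ht Hg.
have Hg' : gZ M' = gZ M by rewrite /gZ Hg.
case: (eqVneq (gZ M) 0) => Hg0.
- have EM := zero_case _ Hg0.
  have EM' : M' = mx2 (M' 0 0) 0 0 (M' 0 0) by apply: zero_case; rewrite Hg'.
  have EMM : M = M'.
    move: Ht; rewrite EM EM' !tr_mx2 => Ht.
    have -> : M 0 0 = M' 0 0 by lia.
    by [].
  subst M'.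
  exists (fun k => 1%:M); split.
    split.
      move=> k l H; apply: map_mx1_2; [exact: redZ0 | exact: redZ1].
    exists (fun k => 1%:M); split.
      move=> k l H; apply: map_mx1_2; [exact: redZ0 | exact: redZ1].
    by move=> k; rewrite mulmx1.
  by move=> k; rewrite mul1mx mulmx1.
have [s Hs] := KT _ _ Hd Ht Hg Hg0.
have Hg0' : gZ M' != 0 by rewrite Hg'.
pose T k := redmx k.+2 (Tmx s).
pose W k := Uk M' k *m invmx (T k) *m invmx (Uk M k).
pose V k := Uk M k *m T k *m invmx (Uk M' k).
have HU := fun k => Uk_unit M k Hg0.
have HU' := fun k => Uk_unit M' k Hg0'.
have HT : forall k, T k \in unitmx by move=> k; exact: Tmx_unit.
have mapT : forall k l, (l.+2 %| k.+2)%N -> map_mx (@redZ k.+2 l.+2) (T k) = T l.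
  by move=> k l H; exact: map_redZ_redmx.
exists W; split; last first.
  move=> k; apply: conj_chain; [exact: HU | exact: HU' | exact: HT | exact: Uk_conj | exact: Uk_conj |].
  by rewrite /T -!redmxM Hs.
split.
  move=> k l H; rewrite /W !(redZ_compat_mulmx _ _ H) !(redZ_compat_inv _ _ H) ?HU ?HT //.
  by rewrite !Uk_compat // mapT.
exists V; split.
  move=> k l H; rewrite /V !(redZ_compat_mulmx _ _ H) !(redZ_compat_inv _ _ H) ?HU' //.
  by rewrite !Uk_compat // mapT.
move=> k; split.
- rewrite /W /V !mulmxA (mulmxKV (HU k)) (mulmxKV (HT k)).
  exact: mulmxV (HU' k).
- rewrite /W /V !mulmxA (mulmxKV (HU' k)) (mulmxK (HT k)).
  exact: mulmxV (HU k).
Qed.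


Lemma conj_mod_sym n M M' : conj_mod n M M' -> conj_mod n M' M.
Proof.
case=> U [HU E]; exists (invmx U); split; first by rewrite unitmx_inv.
have -> : redmx n M = invmx U *m (redmx n M' *m U) by rewrite -E mulKmx.
by rewrite !mulmxA mulmxK.
Qed.

Lemma redmx_det n (M : 'M[int]_2) : \det (redmx n M) = (\det M)%:~R.
Proof.
have -> : \det M = M 0 0 * M 1 1 - M 0 1 * M 1 0 by rewrite {1}(mx2E M) det_mx2.
by rewrite /redmx {1}(mx2E M) map_mx2 det_mx2 intrB !intrM.
Qed.

Lemma redmx_tr n (M : 'M[int]_2) : \tr (redmx n M) = (\tr M)%:~R.
Proof.
have -> : \tr M = M 0 0 + M 1 1 by rewrite {1}(mx2E M) tr_mx2.
by rewrite /redmx {1}(mx2E M) map_mx2 tr_mx2 intrD.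
Qed.

Lemma allmod_eq (z : int) : (forall n, (1 < n)%N -> (n%:Z %| z)%Z) -> z = 0.
Proof.
move=> H; have := H (`|z|.+2)%N isT; rewrite dvdzE /= => Hd.
apply/eqP; rewrite -absz_eq0; apply/eqP.
case: (posnP `|z|) => // Hp.
by have := dvdn_leq Hp Hd; lia.
Qed.

Lemma conj_det n M M' : (1 < n)%N -> conj_mod n M M' -> (n%:Z %| \det M - \det M')%Z.
Proof.
move=> Hn [U [HU E]].
have HdU : \det U \is a GRing.unit by rewrite -unitmxE.
have : \det U * \det (redmx n M) = \det U * \det (redmx n M').
  by rewrite -det_mulmx E det_mulmx mulrC.
move/(mulrI HdU); rewrite !redmx_det => Hd.
by apply: (proj1 (Zp_int_eq0 n _ Hn)); rewrite intrB Hd subrr.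
Qed.

Lemma conj_tr n M M' : (1 < n)%N -> conj_mod n M M' -> (n%:Z %| \tr M - \tr M')%Z.
Proof.
move=> Hn [U [HU E]].
have E' : redmx n M' = U *m (redmx n M *m invmx U) by rewrite mulmxA E mulmxK.
have : \tr (redmx n M) = \tr (redmx n M').
  by rewrite E' mxtrace_mulC -mulmxA mulVmx // mulmx1.
rewrite !redmx_tr => Ht.
by apply: (proj1 (Zp_int_eq0 n _ Hn)); rewrite intrB Ht subrr.
Qed.

Lemma Zp_mul_dvd n (G z : int) (y : 'Z_n) : (1 < n)%N ->
  (z%:~R : 'Z_n) = G%:~R * y -> (gcdz G n %| z)%Z.
Proof.
move=> Hn E.
set w := (y : nat).
have Ey : y = (w%:Z)%:~R by rewrite natz_intr /w natr_Zp.
have Hd : (n%:Z %| z - G * w%:Z)%Z.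
  by apply: (proj1 (Zp_int_eq0 n _ Hn)); rewrite intrB intrM -Ey E subrr.
have -> : z = (z - G * w%:Z) + G * w%:Z by ring.
apply: rpredD.
- exact: dvdz_trans (dvdz_gcdr _ _) Hd.
- exact: dvdz_mulr (dvdz_gcdl _ _).
Qed.

Lemma conj_mgcd n M M' : (1 < n)%N -> conj_mod n M M' -> (gcdz (gZ M) n %| gZ M')%Z.
Proof.
move=> Hn [U [HU E]].
set G := gZ M.
set a : 'Z_n := (M 0 0)%:~R.
set N := redmx n (mx2 0 (bet M) (gam M) (del M)).
have EA : redmx n M = a%:M + G%:~R *: N.
  rewrite /N {1}(M_decomp M) /redmx !map_mx2 scalar_mx2 scale_mx2 add_mx2 !(intrD, intrM).
  by congr mx2; rewrite /a; ring.
have E' : redmx n M' = a%:M + G%:~R *: (U *m (N *m invmx U)).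
  have -> : redmx n M' = U *m (redmx n M *m invmx U) by rewrite mulmxA E mulmxK.
  rewrite EA mulmxDl mulmxDr mul_scalar_mx -scalemxAr (mulmxV HU) scalemx1.
  by rewrite -scalemxAl -scalemxAr.
set Z := U *m (N *m invmx U) in E'.
have Ent : forall i j, (M' i j)%:~R = a *+ (i == j) + G%:~R * Z i j.
  by move=> i j; have := congr1 (fun B : 'M['Z_n]_2 => B i j) E'; rewrite /= !mxE.
rewrite [gZ M']gZE !dvdz_gcd; apply/andP; split; [apply/andP; split|].
- by apply: (Zp_mul_dvd _ _ _ (Z 0 1) Hn); rewrite Ent /= add0r.
- by apply: (Zp_mul_dvd _ _ _ (Z 1 0) Hn); rewrite Ent /= add0r.
- apply: (Zp_mul_dvd _ _ _ (Z 1 1 - Z 0 0) Hn).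
  by rewrite intrB !Ent /= mulrBr; ring.
Qed.


Lemma mgcd_dvd M M' : (forall n : nat, (1 < n)%N -> conj_mod n M M') -> (mgcd M %| mgcd M')%N.
Proof.
move=> H.
case: (posnP (mgcd M)) => Hg.
- have := conj_mgcd _ _ _ (isT : (1 < (mgcd M').+2)%N) (H (mgcd M').+2 isT).
  rewrite dvdzE /gZ Hg /= gcd0n => Hd.
  have : mgcd M' = 0%N.
    case: (posnP (mgcd M')) => // Hp; have := dvdn_leq Hp Hd; lia.
  by move=> ->; rewrite dvdn0.
- have Hn : (1 < mgcd M * 2)%N by lia.
  have := conj_mgcd _ _ _ Hn (H _ Hn).
  rewrite dvdzE /gZ /=.
  by have /gcdn_idPl -> : (mgcd M %| mgcd M * 2)%N by apply: dvdn_mulr.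
Qed.

Lemma a_to_b M M' : (forall n : nat, (1 < n)%N -> conj_mod n M M') ->
  \det M = \det M' /\ \tr M = \tr M' /\ mgcd M = mgcd M'.
Proof.
move=> H; split; [|split].
- apply/eqP; rewrite -subr_eq0; apply/eqP; apply: allmod_eq => n Hn; exact: conj_det _ _ _ Hn (H _ Hn).
- apply/eqP; rewrite -subr_eq0; apply/eqP; apply: allmod_eq => n Hn; exact: conj_tr _ _ _ Hn (H _ Hn).
- apply/eqP; rewrite eqn_dvd mgcd_dvd //= mgcd_dvd // => n Hn.
  exact: conj_mod_sym _ _ _ (H _ Hn).
Qed.

Lemma zhat_to_mod M M' : conj_zhat M M' -> forall n : nat, (1 < n)%N -> conj_mod n M M'.
Proof.
case=> U [[HUc [V [HVc HUV]]] HE] [|[|k]] // _.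
exists (U k); split; last exact: HE.
by case: (HUV k) => H1 _; case: (mulmx1_unit H1).
Qed.

Theorem corollary43 (M M' : 'M[int]_2) :
  ((forall n : nat, (1 < n)%N -> conj_mod n M M') <-> conj_zhat M M') /\
  ((\det M = \det M' /\ \tr M = \tr M' /\ mgcd M = mgcd M') <-> conj_zhat M M').
Proof.
split; split.
- move=> H; have [Hd [Ht Hg]] := a_to_b _ _ H; exact: b_to_zhat.
- exact: zhat_to_mod.
- by case=> Hd [Ht Hg]; exact: b_to_zhat.
- by move=> H; apply: a_to_b; exact: zhat_to_mod.
Qed.
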